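(* Let $p=(a,b,c)\in P$ and let $H_p=\{(x,-\tfrac{x}{a},z): x,z\in\mathbb{R},\ z>\tfrac{x}{a}\}$. Every bounded invariant set of the flow of $F_p$ which is not a fixed point (nor limits to one) intersects $H_p$ transversely at least once. In particular, every periodic trajectory of $F_p$ intersects $H_p$ transversely at least once.
   Context: For $p=(a,b,c)\in\mathbb{R}^3$, $F_p$ is the Rössler vector field $\dot x=-y-z,\ \dot y=x+ay,\ \dot z=bx+z(x-c)$ on $\mathbb{R}^3$. $P\subseteq\mathbb{R}^3$ is an open set of parameters such that for every $p=(a,b,c)\in P$: (1) $a,b\in(0,1)$, $c>1$; (2) $F_p$ has exactly two fixed points, $P_{In}=(0,0,0)$ and $P_{Out}=(c-ab,b-\frac{c}{a},\frac{c}{a}-b)$, both saddle-foci; (3) $P_{In}$ has a one-dimensional stable and two-dimensional unstable manifold, $P_{Out}$ a one-dimensional unstable and two-dimensional stable manifold; (4) at least one of the two saddle indices $\nu_{In},\nu_{Out}$ (ratio of absolute real part of the complex eigenvalues to absolute value of the real eigenvalue) is $<1$. The plane $\{(x,-x/a,z)\}$ is the set $\{\dot y=0\}$; $F_p$ is tangent to it exactly along the line $\{(t,-t/a,t/a)\}$, and $H_p$ is the upper component of its complement in the plane. *)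

(* Defs.v *)
From HB Require Import structures.
From mathcomp Require Import all_boot all_order all_algebra.
From mathcomp Require Import all_classical all_reals all_analysis.
Set Implicit Arguments.
Unset Strict Implicit.
Unset Printing Implicit Defensive.
Import Order.TTheory GRing.Theory Num.Theory.
Import numFieldNormedType.Exports.
Local Open Scope classical_set_scope.
Local Open Scope ring_scope.

Section Rossler.
Variable R : realType.

Definition px (q : R * R * R) : R := q.1.1.
Definition py (q : R * R * R) : R := q.1.2.
Definition pz (q : R * R * R) : R := q.2.

Definition rossler (a b c : R) (q : R * R * R) : R * R * R :=
  ((- py q - pz q, px q + a * py q), b * px q + pz q * (px q - c)).

Definition is_fixed_point (a b c : R) (q : R * R * R) : Prop :=
  rossler a b c q = ((0, 0), 0).

Definition P_In : R * R * R := ((0, 0), 0).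
Definition P_Out (a b c : R) : R * R * R := ((c - a * b, b - c / a), c / a - b).

Definition rossler_jac (a b c : R) (q : R * R * R) : 'M[R]_3 :=
  \matrix_(i < 3, j < 3)
     nth 0 (nth [::] [:: [:: 0; -1; -1];
                         [:: 1; a; 0];
                         [:: b + pz q; 0; px q - c]] i) j.

(* The eigenvalues of M are lam (real) and sig +- i om with om <> 0,
   i.e. the characteristic polynomial factors accordingly. *)
Definition spectrum_saddle_focus (M : 'M[R]_3) (lam sig om : R) : Prop :=
  om != 0 /\
  char_poly M = ('X - lam%:P) * (('X - sig%:P) ^+ 2 + (om ^+ 2)%:P).

Definition rossler_param_ok (p : R * R * R) : Prop :=
  let a := p.1.1 in let b := p.1.2 in let c := p.2 in
  [/\ (0 < a < 1) /\ (0 < b < 1) /\ 1 < c,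
      (forall q, is_fixed_point a b c q <-> q = P_In \/ q = P_Out a b c)
        /\ P_In != P_Out a b c
    & (* (2),(3),(4): both saddle-foci; P_In: 1-dim stable / 2-dim unstable,
         P_Out: 1-dim unstable / 2-dim stable; some saddle index < 1 *)
      exists lI sI oI lO sO oO : R,
        [/\ spectrum_saddle_focus (rossler_jac a b c P_In) lI sI oI,
            spectrum_saddle_focus (rossler_jac a b c (P_Out a b c)) lO sO oO,
            lI < 0 < sI,
            sO < 0 < lO
          & `|sI| / `|lI| < 1 \/ `|sO| / `|lO| < 1]].

(* H_p : upper component of {ydot = 0} minus the tangency line *)
Definition H_p (a : R) : set (R * R * R) :=
  [set q | py q = - px q / a /\ px q / a < pz q].

(* F_p(q) is transverse to the plane {x + a y = 0} (normal vector (1,a,0)) *)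
Definition transverse_to_plane (a b c : R) (q : R * R * R) : Prop :=
  px (rossler a b c q) + a * py (rossler a b c q) != 0.

Definition is_trajectory (a b c : R) (g : R -> R * R * R) : Prop :=
  forall t : R, is_derive t 1 g (rossler a b c (g t)).

Definition invariant_set (a b c : R) (S : set (R * R * R)) : Prop :=
  forall q, S q -> exists g : R -> R * R * R,
    is_trajectory a b c g /\ g 0 = q /\ forall t, S (g t).

Definition bounded3 (S : set (R * R * R)) : Prop :=
  exists M : R, forall q, S q -> `|px q| <= M /\ `|py q| <= M /\ `|pz q| <= M.

End Rossler.

(* Main.v *)
Require Import Defs.
From HB Require Import structures.
From mathcomp Require Import all_boot all_order all_algebra.
From mathcomp Require Import all_classical all_reals all_analysis.
From mathcomp Require Import ring lra.
Import Order.TTheory GRing.Theory Num.Theory.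
Import numFieldNormedType.Exports.
Local Open Scope classical_set_scope.
Local Open Scope ring_scope.


Lemma min2 (R : realType) (d d' : R) : 0 < d -> 0 < d' -> exists e, [/\ 0 < e, e <= d & e <= d'].
Proof. move=> h h'; case: (lerP d d') => H; [exists d | exists d']; split => //; exact: ltW. Qed.

Lemma alg_bound (R : realType) (P a Q B dx dy dz : R) : `|dx| <= B ->
  `|2 * (P*(dx*dz) + a*(dy*dy) + (dx+Q)*(dz*dz))| <=
  (`|P| + 2 * `|a| + 2*(B + `|Q|)) * (dx*dx+dy*dy+dz*dz).
Proof.
move=> hB.
have sx : 0 <= dx * dx by rewrite -expr2 sqr_ge0.
have sy : 0 <= dy * dy by rewrite -expr2 sqr_ge0.
have sz : 0 <= dz * dz by rewrite -expr2 sqr_ge0.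
have h1 : `|P*(dx*dz)| <= `|P| * ((dx*dx + dz*dz)/2).
  rewrite normrM; apply: ler_wpM2l => //.
  have : 0 <= (`|dx| - `|dz|)^+2 by rewrite sqr_ge0.
  rewrite normrM -[dx * dx]real_normK ?num_real// -[dz * dz]real_normK ?num_real// => h.
  nra.
have h2 : `|a*(dy*dy)| <= `|a| * (dy*dy) by rewrite normrM (ger0_norm sy).
have h3 : `|(dx+Q)*(dz*dz)| <= (B + `|Q|) * (dz*dz).
  rewrite normrM (ger0_norm sz); apply: ler_wpM2r => //.
  by apply: le_trans (ler_normD _ _) _; rewrite lerD2r.
rewrite normrM ger0_norm //.
have h4 := ler_normD (P*(dx*dz) + a*(dy*dy)) ((dx+Q)*(dz*dz)).
have h5 := ler_normD (P*(dx*dz)) (a*(dy*dy)).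
have hP := normr_ge0 P; have ha := normr_ge0 a; have hQ := normr_ge0 Q.
have hB0 : 0 <= B by apply: le_trans hB.
nra.
Qed.

Section S.
Variable R : realType.
Implicit Types (f df : R -> R) (s t u : R).

Lemma derive_fst (U V : normedModType R) (f : R -> U * V) (x : R) (df : U * V) :
  is_derive x 1 f df -> is_derive x 1 (fun t => (f t).1) df.1.
Proof.
move=> [fd fv].
have H : (fun h : R => h^-1 *: ((f \o shift x) (h *: 1) - f x)) @ 0^' --> df.
  by rewrite -fv; exact: fd.
have H1 : (fst \o (fun h : R => h^-1 *: ((f \o shift x) (h *: 1) - f x))) @ 0^' --> df.1.
  exact: (cvg_comp _ _ H (@cvg_fst _ _ (nbhs df.1) (nbhs df.2) _)).
have E : (fun h : R => h^-1 *: (((fun t => (f t).1) \o shift x) (h *: 1) - (f x).1)) =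
   fst \o (fun h : R => h^-1 *: ((f \o shift x) (h *: 1) - f x)) by [].
split; rewrite /derivable /derive E; first by apply/cvg_ex; eexists; exact: H1.
apply: cvg_lim H1; exact: (@norm_hausdorff R U).
Qed.

Lemma derive_snd (U V : normedModType R) (f : R -> U * V) (x : R) (df : U * V) :
  is_derive x 1 f df -> is_derive x 1 (fun t => (f t).2) df.2.
Proof.
move=> [fd fv].
have H : (fun h : R => h^-1 *: ((f \o shift x) (h *: 1) - f x)) @ 0^' --> df.
  by rewrite -fv; exact: fd.
have H1 : (snd \o (fun h : R => h^-1 *: ((f \o shift x) (h *: 1) - f x))) @ 0^' --> df.2.
  exact: (cvg_comp _ _ H (@cvg_snd _ _ (nbhs df.1) (nbhs df.2) _)).
have E : (fun h : R => h^-1 *: (((fun t => (f t).2) \o shift x) (h *: 1) - (f x).2)) =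
   snd \o (fun h : R => h^-1 *: ((f \o shift x) (h *: 1) - f x)) by [].
split; rewrite /derivable /derive E; first by apply/cvg_ex; eexists; exact: H1.
apply: cvg_lim H1; exact: (@norm_hausdorff R V).
Qed.

Lemma der_cont f df : (forall u : R, is_derive u 1 f (df u)) -> continuous f.
Proof.
move=> H t; apply/differentiable_continuous/derivable1_diffP.
exact: (@ex_derive _ _ _ _ _ _ _ (H t)).
Qed.

Arguments der_cont {f df}.

Lemma cont_eps f t : {for t, continuous f} ->
  forall e, 0 < e -> exists2 d, 0 < d & forall u, `|u - t| < d -> `|f u - f t| < e.
Proof.
move=> /cvgrPdist_lt H e e0.
have /nbhs_ballP[d d0 Hd] := H e e0.
exists d => // u ut; rewrite distrC; apply: Hd.
by rewrite /ball /= distrC.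
Qed.

Arguments cont_eps {f t}.

Lemma mvt_lt f df s t : (forall u : R, is_derive u 1 f (df u)) -> s < t ->
  (forall u, s < u < t -> 0 < df u) -> f s < f t.
Proof.
move=> H st pos.
have [c cin E] := @MVT R f df s t st (fun x _ => H x)
   (continuous_subspaceT (der_cont H)).
rewrite -subr_gt0 E; apply: mulr_gt0; last by rewrite subr_gt0.
by apply: pos; move: cin; rewrite in_itv /=.
Qed.

Arguments mvt_lt {f df s t}.
Lemma mvt_le f df s t : (forall u, is_derive u 1 f (df u)) -> s <= t ->
  (forall u, s < u < t -> 0 <= df u) -> f s <= f t.
Proof.
move=> H; rewrite le_eqVlt => /orP[/eqP->|st] pos; first by [].
have [c cin E] := @MVT R f df s t st (fun x _ => H x)
   (continuous_subspaceT (der_cont H)).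
rewrite -subr_ge0 E; apply: mulr_ge0; last by rewrite subr_ge0 ltW.
by apply: pos; move: cin; rewrite in_itv /=.
Qed.


Arguments mvt_le {f df s t}.
Lemma dD (f g : R -> R) t (df dg : R) : is_derive t 1 f df -> is_derive t 1 g dg ->
  is_derive t 1 (fun u => f u + g u) (df + dg).
Proof. move=> H1 H2; exact: is_deriveD. Qed.
Lemma dB (f g : R -> R) t (df dg : R) : is_derive t 1 f df -> is_derive t 1 g dg ->
  is_derive t 1 (fun u => f u - g u) (df - dg).
Proof. move=> H1 H2; exact: is_deriveB. Qed.
Lemma dN (f : R -> R) t (df : R) : is_derive t 1 f df -> is_derive t 1 (fun u => - f u) (- df).
Proof. move=> H1; exact: is_deriveN. Qed.
Lemma dM (f g : R -> R) t (df dg : R) : is_derive t 1 f df -> is_derive t 1 g dg ->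
  is_derive t 1 (fun u => f u * g u) (f t * dg + g t * df).
Proof. move=> H1 H2; exact: is_deriveM. Qed.
Lemma dZ (f : R -> R) t (k : R) (df : R) : is_derive t 1 f df -> is_derive t 1 (fun u => k * f u) (k * df).
Proof. move=> H1; exact: is_deriveZ. Qed.
Lemma dC t (k : R) : is_derive t 1 (fun u : R => k) 0.
Proof. exact: is_derive_cst. Qed.
Lemma dE (f : R -> R) t (d1 d2 : R) : is_derive t 1 f d1 -> d1 = d2 -> is_derive t 1 f d2.
Proof. by move=> H <-. Qed.


Lemma mvt_lt_neg f df s t : (forall u, is_derive u 1 f (df u)) -> s < t ->
  (forall u, s < u < t -> df u < 0) -> f t < f s.
Proof.
move=> H st neg.
have H' : forall u, is_derive u 1 (fun v => - f v) (- df u) by move=> u; apply: dN.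
have := mvt_lt H' st; rewrite ltrN2; apply=> u /neg; by rewrite oppr_gt0.
Qed.

Arguments dD {f g t df dg}. Arguments dB {f g t df dg}. Arguments dN {f t df}.
Arguments dM {f g t df dg}. Arguments dZ {f t} k {df}. Arguments dE {f t d1} d2.
Arguments mvt_lt_neg {f df s t}.
Lemma dexp (k t : R) : is_derive t 1 (fun u => expR (k * u)) (expR (k * t) * k).
Proof.
have h1 : is_derive t 1 (fun u : R => k * u) k.
  by apply: dE; rewrite /GRing.scale /= mulr1.
exact: (@is_derive1_comp R expR (fun u => k * u) t (expR (k * t)) k (is_derive_expR _) h1).
Qed.

Section Ode.
Variables (a b c : R) (x y z : R -> R).
Hypothesis Hx : forall t, is_derive t 1 x (- y t - z t).
Hypothesis Hy : forall t, is_derive t 1 y (x t + a * y t).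
Hypothesis Hz : forall t, is_derive t 1 z (b * x t + z t * (x t - c)).

Definition w t := x t + a * y t.
Definition w1 t := - y t - z t + a * w t.
Definition zd t := b * x t + z t * (x t - c).
Definition w2 t := - w t - zd t + a * w1 t.
Definition zdd t := b * (- y t - z t) + (z t * (- y t - z t) + (x t - c) * zd t).
Definition w3 t := - w1 t - zdd t + a * w2 t.

Lemma Hw t : is_derive t 1 w (w1 t).
Proof.
change (is_derive t 1 (fun u => x u + a * y u) (w1 t)).
apply: dE; by rewrite /w1 /w.
Qed.

Lemma Hzd t : is_derive t 1 zd (zdd t).
Proof.
change (is_derive t 1 (fun u => b * x u + z u * (x u - c)) (zdd t)).
apply: dE; by rewrite /zdd /zd subr0.
Qed.

Lemma Hw1 t : is_derive t 1 w1 (w2 t).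
Proof.
have := Hw; have := Hzd => H1 H2.
change (is_derive t 1 (fun u => - y u - z u + a * w u) (w2 t)).
apply: dE; by rewrite /w2 /w1 /w.
Qed.

Lemma Hw2 t : is_derive t 1 w2 (w3 t).
Proof.
have := Hw; have := Hzd; have := Hw1 => H1 H2 H3.
change (is_derive t 1 (fun u => - w u - zd u + a * w1 u) (w3 t)).
apply: dE; by rewrite /w3.
Qed.


Lemma local_max (m d0 : R) : 0 < a -> 0 < d0 -> (forall t, `|t - m| < d0 -> y t <= y m) ->
  ~ (- y m - z m = 0 /\ w m = 0 /\ zd m = 0) -> y m = - x m / a /\ x m / a < z m.
Proof.
move=> a0 d00 ymax nfix.
have R1 : forall d, 0 < d -> (forall u, m < u < m + d -> 0 < w u) -> False.
  move=> d dp pos; have [e [e0 ed ed0]] := @min2 R _ _ dp d00.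
  pose t := m + e / 2.
  have mt : m < t by rewrite /t; lra.
  have h2 : y m < y t.
    apply: (mvt_lt (df := w) Hy mt) => u /andP[h3 h4]; apply: pos.
    apply/andP; split; rewrite /t in h4; lra.
  have /ymax h1 : `|t - m| < d0 by rewrite /t ltr_norml; apply/andP; split; lra.
  by have := lt_le_trans h2 h1; rewrite ltxx.
have L1 : forall d, 0 < d -> (forall u, m - d < u < m -> w u < 0) -> False.
  move=> d dp neg; have [e [e0 ed ed0]] := @min2 R _ _ dp d00.
  pose t := m - e / 2.
  have mt : t < m by rewrite /t; lra.
  have h2 : y m < y t.
    apply: (mvt_lt_neg (df := w) Hy mt) => u /andP[h3 h4]; apply: neg.
    apply/andP; split; rewrite /t in h3; lra.
  have /ymax h1 : `|t - m| < d0 by rewrite /t ltr_norml; apply/andP; split; lra.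
  by have := lt_le_trans h2 h1; rewrite ltxx.
have cw := der_cont Hw; have cw1 := der_cont Hw1; have cw2 := der_cont Hw2.
have nearpos : forall f, continuous f -> 0 < f m ->
    exists2 d, 0 < d & forall u, m - d < u < m + d -> 0 < f u.
  move=> f cf fm; have [d dp Hd] := cont_eps (cf m) _ fm.
  exists d => // u /andP[h1 h2].
  have : `|f u - f m| < f m by apply: Hd; rewrite ltr_norml; apply/andP; split; lra.
  rewrite ltr_norml => /andP[h3 h4]; lra.
have nearneg : forall f, continuous f -> f m < 0 ->
    exists2 d, 0 < d & forall u, m - d < u < m + d -> f u < 0.
  move=> f cf fm; have fm' : 0 < - f m by lra.
  have [d dp Hd] := cont_eps (cf m) _ fm'.
  exists d => // u /andP[h1 h2].
  have : `|f u - f m| < - f m by apply: Hd; rewrite ltr_norml; apply/andP; split; lra.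
  rewrite ltr_norml => /andP[h3 h4]; lra.
have wm0 : w m = 0.
  case: (ltgtP (w m) 0) => // h.
    have [d dp Hd] := nearneg _ cw h; exfalso; apply: (L1 d dp) => u /andP[h1 h2].
    by apply: Hd; apply/andP; split; lra.
  have [d dp Hd] := nearpos _ cw h; exfalso; apply: (R1 d dp) => u /andP[h1 h2].
  by apply: Hd; apply/andP; split; lra.
have an0 : a != 0 by rewrite gt_eqF.
case: (ltgtP (w1 m) 0) => h.
- move: wm0 h; rewrite /w1 /w => h1 h2.
  have hx : x m = - (a * y m) by lra.
  have -> : x m / a = - y m by rewrite hx; field.
  split; last by move: h2; rewrite h1 mulr0 addr0; lra.
  by rewrite hx; field.
- exfalso; have [d dp Hd] := nearpos _ cw1 h; apply: (L1 d dp) => u /andP[h1 h2].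
  rewrite -wm0; apply: (mvt_lt (df := w1) Hw h2) => v /andP[h3 h4].
  by apply: Hd; apply/andP; split; lra.
- exfalso; have w2m : w2 m = - zd m by rewrite /w2 wm0 h; lra.
  case: (ltgtP (w2 m) 0) => h'.
  + have [d dp Hd] := nearneg _ cw2 h'; apply: (L1 d dp) => u /andP[h1 h2].
    rewrite -wm0; apply: (mvt_lt (df := w1) Hw h2) => v /andP[h3 h4].
    rewrite -h; apply: (mvt_lt_neg (df := w2) Hw1 h4) => v' /andP[h5 h6].
    by apply: Hd; apply/andP; split; lra.
  + have [d dp Hd] := nearpos _ cw2 h'; apply: (R1 d dp) => u /andP[h1 h2].
    rewrite -wm0; apply: (mvt_lt (df := w1) Hw h1) => v /andP[h3 h4].
    rewrite -h; apply: (mvt_lt (df := w2) Hw1 h3) => v' /andP[h5 h6].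
    by apply: Hd; apply/andP; split; lra.
  + apply: nfix; split; last (split => //; lra).
    move: h; rewrite /w1 wm0; lra.
Qed.


Section Energy.
Variables (X0 Y0 Z0 : R).
Definition en t := (x t - X0) * (x t - X0) + (y t - Y0) * (y t - Y0) + (z t - Z0) * (z t - Z0).
Definition den t := 2 * ((x t - X0) * (- y t - z t) + (y t - Y0) * (x t + a * y t)
   + (z t - Z0) * (b * x t + z t * (x t - c))).

Lemma Hen t : is_derive t 1 en (den t).
Proof.
change (is_derive t 1 (fun u => (x u - X0) * (x u - X0) + (y u - Y0) * (y u - Y0) + (z u - Z0) * (z u - Z0)) (den t)).
apply: dE; rewrite /den !subr0 -![_ *: _]/(_ * _); ring.
Qed.
End Energy.

Lemma energy (s t0 X0 Y0 Z0 : R) : - Y0 - Z0 = 0 -> X0 + a * Y0 = 0 ->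
  b * X0 + Z0 * (X0 - c) = 0 -> x s = X0 -> y s = Y0 -> z s = Z0 ->
  x t0 = X0 /\ y t0 = Y0 /\ z t0 = Z0.
Proof.
move=> f1 f2 f3 hx hy hz.
have enge0 u : 0 <= en X0 Y0 Z0 u.
  by rewrite /en; rewrite -!expr2 !addr_ge0 // sqr_ge0.
suff : en X0 Y0 Z0 t0 = 0.
  rewrite /en => h.
  have sx : 0 <= (x t0 - X0) * (x t0 - X0) by rewrite -expr2 sqr_ge0.
  have sy : 0 <= (y t0 - Y0) * (y t0 - Y0) by rewrite -expr2 sqr_ge0.
  have sz : 0 <= (z t0 - Z0) * (z t0 - Z0) by rewrite -expr2 sqr_ge0.
  have ex : (x t0 - X0) * (x t0 - X0) = 0 by lra.
  have ey : (y t0 - Y0) * (y t0 - Y0) = 0 by lra.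
  have ez : (z t0 - Z0) * (z t0 - Z0) = 0 by lra.
  move/eqP: ex; move/eqP: ey; move/eqP: ez.
  by rewrite !mulf_eq0 !orbb !subr_eq0 => /eqP -> /eqP -> /eqP ->.
have e0 : en X0 Y0 Z0 s = 0 by rewrite /en hx hy hz !subrr !mulr0 !addr0.
have bnd : forall B u, `|x u - X0| <= B -> `|den X0 Y0 Z0 u| <=
   (`|b + Z0 - 1| + 2 * `|a| + 2 * (B + `|X0 - c|)) * en X0 Y0 Z0 u.
  move=> B u hB.
  have -> : den X0 Y0 Z0 u = 2 * ((b + Z0 - 1) * ((x u - X0) * (z u - Z0)) +
     a * ((y u - Y0) * (y u - Y0)) + ((x u - X0) + (X0 - c)) * ((z u - Z0) * (z u - Z0)))
     + 2 * ((x u - X0) * (- Y0 - Z0) + (y u - Y0) * (X0 + a * Y0) +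
         (z u - Z0) * (b * X0 + Z0 * (X0 - c))).
    by rewrite /den; ring.
  rewrite f1 f2 f3 !mulr0 !addr0.
  rewrite mulr0 addr0 /en; exact: alg_bound.
have cxn : continuous (fun u => `|x u - X0|).
  move=> u; apply: (@continuous_comp _ _ _ (fun v => x v - X0) (@Num.norm _ R)); last exact: norm_continuous.
  apply: continuousB; [exact: (der_cont Hx) | exact: cst_continuous].
case: (lerP s t0) => st.
- have [cm _ hcm] := EVT_max st (continuous_subspaceT cxn).
  pose B := `|x cm - X0|.
  pose K := `|b + Z0 - 1| + 2 * `|a| + 2 * (B + `|X0 - c|).
  have Hk : forall u, is_derive u 1 (fun v => - (en X0 Y0 Z0 v * expR (- K * v)))
     (- (en X0 Y0 Z0 u * (expR (- K * u) * - K) + expR (- K * u) * den X0 Y0 Z0 u)).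
    move=> u; apply: dN; apply: dM; [exact: Hen | exact: dexp].
  have H : - (en X0 Y0 Z0 s * expR (- K * s)) <= - (en X0 Y0 Z0 t0 * expR (- K * t0)).
    apply: (mvt_le Hk st) => u /andP[h1 h2].
    have hb := bnd B u (hcm u _).
    have /hb : u \in `[s, t0] by rewrite in_itv /=; apply/andP; split; lra.
    rewrite ler_norml => /andP[_ hb'].
    have E0 := expR_gt0 (- K * u); have := enge0 u; rewrite -/K in hb'; nra.
  rewrite e0 mul0r oppr0 in H.
  have E0 := expR_gt0 (- K * t0); have := enge0 t0 => h.
  apply/eqP; rewrite eq_le h andbT; nra.
- have [cm _ hcm] := EVT_max (ltW st) (continuous_subspaceT cxn).
  pose B := `|x cm - X0|.
  pose K := `|b + Z0 - 1| + 2 * `|a| + 2 * (B + `|X0 - c|).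
  have Hk : forall u, is_derive u 1 (fun v => en X0 Y0 Z0 v * expR (K * v))
     (en X0 Y0 Z0 u * (expR (K * u) * K) + expR (K * u) * den X0 Y0 Z0 u).
    move=> u; apply: dM; [exact: Hen | exact: dexp].
  have H : en X0 Y0 Z0 t0 * expR (K * t0) <= en X0 Y0 Z0 s * expR (K * s).
    apply: (mvt_le Hk (ltW st)) => u /andP[h1 h2].
    have hb := bnd B u (hcm u _).
    have /hb : u \in `[t0, s] by rewrite in_itv /=; apply/andP; split; lra.
    rewrite ler_norml => /andP[hb' _].
    have E0 := expR_gt0 (K * u); have := enge0 u; rewrite -/K in hb'; nra.
  rewrite e0 mul0r in H.
  have E0 := expR_gt0 (K * t0); have := enge0 t0 => h.
  apply/eqP; rewrite eq_le h andbT; nra.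
Qed.
End Ode.
End S.


Arguments mvt_lt {R f df s t}.
Arguments mvt_lt_neg {R f df s t}.
Arguments mvt_le {R f df s t}.
Arguments der_cont {R f df}.
Arguments cont_eps {R f t}.
Arguments Hw {R a x y z} Hx Hy t.
Arguments Hw1 {R a b c x y z} Hx Hy Hz t.
Arguments Hw2 {R a b c x y z} Hx Hy Hz t.
Arguments Hzd {R b c x y z} Hx Hz t.
Arguments local_max {R a b c x y z} Hx Hy Hz m d0.
Arguments min2 {R d d'}.

Section Conv.
Variable R : realType.
Implicit Types (f g : R -> R) (s t u l m e : R).

Definition convg f l := forall e, 0 < e -> exists T, forall t, T <= t -> `|f t - l| < e.
Definition bnd f := exists K, forall t, `|f t| <= K.

Lemma half_pos e : 0 < e -> 0 < e / 2.
Proof. move=> h; lra. Qed.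

Arguments half_pos {e}.

Lemma max2 (T1 T2 : R) : exists T, T1 <= T /\ T2 <= T.
Proof.
exists (`|T1| + `|T2|); have := ler_norm T1; have := ler_norm T2.
have := normr_ge0 T1; have := normr_ge0 T2; split; lra.
Qed.

Lemma convD f g l m : convg f l -> convg g m -> convg (fun t => f t + g t) (l + m).
Proof.
move=> hf hg e e0.
have [T1 H1] := hf (e/2) (half_pos e0).
have [T2 H2] := hg (e/2) (half_pos e0).
have [T [h1 h2]] := max2 T1 T2; exists T => t tT.
have := H1 t (le_trans h1 tT); have := H2 t (le_trans h2 tT).
rewrite !ltr_norml => /andP[a1 a2] /andP[a3 a4]; apply/andP; split; lra.
Qed.

Lemma convN f l : convg f l -> convg (fun t => - f t) (- l).
Proof.
move=> hf e e0; have [T H] := hf e e0; exists T => t tT.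
by rewrite -opprD normrN; apply: H.
Qed.

Lemma convC l : convg (fun _ => l) l.
Proof. by move=> e e0; exists 0 => t _; rewrite subrr normr0. Qed.

Lemma convM f g l m K : (forall t, `|f t| <= K) -> convg f l -> convg g m ->
  convg (fun t => f t * g t) (l * m).
Proof.
move=> hK hf hg e e0.
have K0 : 0 <= K by apply: le_trans (hK 0); exact: normr_ge0.
pose K1 := K + 1; pose M1 := `|m| + 1.
have K10 : 0 < K1 by rewrite /K1; lra.
have M10 : 0 < M1 by rewrite /M1; have := normr_ge0 m; lra.
have M2 : 0 < 2 * M1 by lra.
have K2 : 0 < 2 * K1 by lra.
have [T1 H1] := hf (e / (2 * M1)) (divr_gt0 e0 M2).
have [T2 H2] := hg (e / (2 * K1)) (divr_gt0 e0 K2).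
have [T [h1 h2]] := max2 T1 T2; exists T => t tT.
have A1 := H1 t (le_trans h1 tT); have A2 := H2 t (le_trans h2 tT).
have -> : f t * g t - l * m = f t * (g t - m) + (f t - l) * m by ring.
apply: le_lt_trans (ler_normD _ _) _; rewrite !normrM.
have B1 : `|f t| * `|g t - m| <= K1 * (e / (2 * K1)).
  apply: ler_pM; rewrite ?normr_ge0 //; last exact: ltW.
  by have := hK t; rewrite /K1; lra.
have B2 : `|f t - l| * `|m| < (e / (2 * M1)) * M1.
  have mm : `|m| < M1 by rewrite /M1; lra.
  have := normr_ge0 (f t - l); have := normr_ge0 m => p1 p2.
  have q : 0 < e / (2 * M1) by apply: divr_gt0 => //; lra.
  nra.
have E1 : K1 * (e / (2 * K1)) = e / 2 by field; rewrite gt_eqF.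
have E2 : (e / (2 * M1)) * M1 = e / 2 by field; rewrite gt_eqF.
lra.
Qed.

Arguments convD {f g l m}.
Arguments convN {f l}.
Arguments convM {f g l m K}.

Lemma conv_uniq f l m : convg f l -> convg f m -> l = m.
Proof.
move=> hl hm; apply/eqP; rewrite -subr_eq0 -normr_eq0; apply/eqP.
apply/le_anti/andP; split; last exact: normr_ge0.
apply/ler_addgt0Pr => e e0; rewrite add0r.
have [T1 H1] := hl (e/2) (half_pos e0).
have [T2 H2] := hm (e/2) (half_pos e0).
have [T [h1 h2]] := max2 T1 T2.
have := H1 T h1; have := H2 T h2.
rewrite !ltr_norml => /andP[a1 a2] /andP[a3 a4].
rewrite ler_norml; apply/andP; split; lra.
Qed.

Arguments conv_uniq {f l m}.

Lemma bndD f g : bnd f -> bnd g -> bnd (fun t => f t + g t).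
Proof.
move=> [K1 h1] [K2 h2]; exists (K1 + K2) => t.
by apply: le_trans (ler_normD _ _) _; apply: lerD.
Qed.
Lemma bndN f : bnd f -> bnd (fun t => - f t).
Proof. by move=> [K h]; exists K => t; rewrite normrN. Qed.
Lemma bndM f g : bnd f -> bnd g -> bnd (fun t => f t * g t).
Proof.
move=> [K1 h1] [K2 h2]; exists (K1 * K2) => t; rewrite normrM.
by apply: ler_pM; rewrite ?normr_ge0.
Qed.
Lemma bndC (k : R) : bnd (fun _ => k).
Proof. by exists `|k|. Qed.


Lemma mono_conv f M t1 : (forall t, `|f t| <= M) ->
  (forall s t, t1 <= s -> s <= t -> f s <= f t) -> exists l, convg f l.
Proof.
move=> hM hmono.
pose E := [set v | exists2 t, t1 <= t & v = f t].
have hs : has_sup E.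
  split; first by exists (f t1); exists t1.
  exists M => v [t _ ->]; have := hM t; rewrite ler_norml => /andP[_ ->].
  done.
exists (sup E) => e e0.
have [v [t' t1t' ->] hv] := sup_adherent e0 hs.
exists t' => t tt'.
have h1 : f t' <= f t by apply: hmono.
have h2 : f t <= sup E by apply: sup_upper_bound => //; exists t => //; apply: le_trans tt'.
rewrite ltr_norml; apply/andP; split; lra.
Qed.

Lemma barbalat f (df ddf : R -> R) l K : convg f l -> (forall t, is_derive t 1 f (df t)) ->
  (forall t, is_derive t 1 df (ddf t)) -> (forall t, `|ddf t| <= K) -> convg df 0.
Proof.
move=> hf Hf Hdf hK e e0.
have K0 : 0 <= K by apply: le_trans (hK 0); exact: normr_ge0.
pose K1 := K + 1.
have K10 : 0 < K1 by rewrite /K1; lra.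
pose h := e / (4 * K1).
have h0 : 0 < h by apply: divr_gt0 => //; lra.
have eh : 0 < e * h / 4 by have := mulr_gt0 e0 h0; lra.
have [T HT] := hf (e * h / 4) eh.
exists T => t tT.
have th : t < t + h by lra.
have [xi xin E1] := MVT th (fun u _ => Hf u) (continuous_subspaceT (der_cont Hf)).
move: xin; rewrite in_itv /= => /andP[x1 x2].
have A1 := HT t tT.
have tT' : T <= t + h by lra.
have A2 := HT (t + h) tT'.
have [zeta zin E2] := MVT x1 (fun u _ => Hdf u) (continuous_subspaceT (der_cont Hdf)).
move: zin; rewrite in_itv /= => /andP[z1 z2].
have Bz := hK zeta.
move: A1 A2 Bz; rewrite !ltr_norml ler_norml => /andP[a1 a2] /andP[a3 a4] /andP[b1 b2].
have Kh : K1 * h = e / 4 by rewrite /h; field; rewrite gt_eqF.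
have D1 : - (e / 2) < df xi /\ df xi < e / 2.
  have : df xi * h < e * h / 2 /\ - (e * h / 2) < df xi * h.
    have -> : df xi * h = f (t + h) - f t by rewrite E1; congr (_ * _); ring.
    split; lra.
  move=> [c1 c2]; split; nra.
have D2 : - (K * h) <= ddf zeta * (xi - t) /\ ddf zeta * (xi - t) <= K * h.
  split; nra.
rewrite subr0; apply/andP; split.
  have : df t = df xi - ddf zeta * (xi - t) by rewrite -E2; ring.
  move: Kh; rewrite /K1; nra.
have : df t = df xi - ddf zeta * (xi - t) by rewrite -E2; ring.
move: Kh; rewrite /K1; nra.
Qed.


Lemma near_pos f t : continuous f -> 0 < f t ->
    exists2 d, 0 < d & forall u, `|u - t| < d -> 0 < f u.
Proof.
move=> cf fm; have [d dp Hd] := cont_eps (cf t) _ fm.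
exists d => // u hu; have := Hd u hu; rewrite ltr_norml => /andP[h3 h4]; lra.
Qed.

Lemma near_neg f t : continuous f -> f t < 0 ->
    exists2 d, 0 < d & forall u, `|u - t| < d -> f u < 0.
Proof.
move=> cf fm; have fm' : 0 < - f t by lra.
have [d dp Hd] := cont_eps (cf t) _ fm'.
exists d => // u hu; have := Hd u hu; rewrite ltr_norml => /andP[h3 h4]; lra.
Qed.

Arguments near_pos {f t}.
Arguments near_neg {f t}.

Section Part1.
Variables (a b c : R) (x y z : R -> R).
Hypothesis Hx : forall t, is_derive t 1 x (- y t - z t).
Hypothesis Hy : forall t, is_derive t 1 y (x t + a * y t).
Hypothesis Hz : forall t, is_derive t 1 z (b * x t + z t * (x t - c)).
Hypothesis a0 : 0 < a.
Hypothesis noH : forall t, ~ (y t = - x t / a /\ x t / a < z t).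
Hypothesis noF : forall t, ~ (- y t - z t = 0 /\ w R a x y t = 0 /\ zd R b c x z t = 0).

Lemma noswitch t1 t2 : t1 < t2 -> 0 < w R a x y t1 -> w R a x y t2 < 0 -> False.
Proof.
move=> t12 w1p w2n.
have cw := der_cont (Hw Hx Hy).
have [m mI hm] := EVT_max (ltW t12) (continuous_subspaceT (der_cont Hy)).
move: mI; rewrite in_itv /= => /andP[m1 m2].
have inI : forall u, t1 <= u <= t2 -> y u <= y m by move=> u hu; apply: hm; rewrite in_itv.
have [tm | mt | em] := ltgtP t1 m; last first.
- subst m; have [d dp Hd] := near_pos cw w1p.
  have t0 : 0 < t2 - t1 by lra.
  have [ee [ee0 e1 e2]] := min2 dp t0.
  pose t := t1 + ee / 2.
  have h1 : y t1 < y t.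
    apply: (mvt_lt (df := w R a x y) Hy (_ : t1 < t)); first by rewrite /t; lra.
    move=> u /andP[u1 u2]; apply: Hd; rewrite /t in u2.
    rewrite ltr_norml; apply/andP; split; lra.
  have h2 : y t <= y t1 by apply: inI; rewrite /t; apply/andP; split; lra.
  lra.
- lra.
case: (ltgtP m t2) m2 => // [mt2 _ | em _].
- have d1 : 0 < m - t1 by lra.
  have d2 : 0 < t2 - m by lra.
  have [d0 [d00 e1 e2]] := min2 d1 d2.
  apply: (noH m); apply: (local_max Hx Hy Hz m d0 a0 d00) => //.
  move=> u; rewrite ltr_norml => /andP[u1 u2]; apply: inI; apply/andP; split; lra.
- subst m; have [d dp Hd] := near_neg cw w2n.
  have t0 : 0 < t2 - t1 by lra.
  have [ee [ee0 e1 e2]] := min2 dp t0.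
  pose t := t2 - ee / 2.
  have h1 : y t2 < y t.
    apply: (mvt_lt_neg (df := w R a x y) Hy (_ : t < t2)); first by rewrite /t; lra.
    move=> u /andP[u1 u2]; apply: Hd; rewrite /t in u1.
    rewrite ltr_norml; apply/andP; split; lra.
  have h2 : y t <= y t2 by apply: inI; rewrite /t; apply/andP; split; lra.
  lra.
Qed.


Lemma conv_ext f g l : (forall t, f t = g t) -> convg f l -> convg g l.
Proof. by move=> e hf eps e0; have [T H] := hf eps e0; exists T => t tT; rewrite -e; apply: H. Qed.

Lemma bnd_le f : bnd f -> exists K, forall t, `|f t| <= K.
Proof. by []. Qed.

Variable M : R.
Hypothesis hM : forall t, `|x t| <= M /\ `|y t| <= M /\ `|z t| <= M.

Ltac bt := repeat first [apply: bndD | apply: bndN | apply: bndM | apply: bndC | assumption].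

Lemma limit_fixed : exists X Y Z, [/\ convg x X, convg y Y, convg z Z &
  (- Y - Z = 0 /\ X + a * Y = 0 /\ b * X + Z * (X - c) = 0)].
Proof.
have bx : bnd x by exists M => t; have [] := hM t.
have by_ : bnd y by exists M => t; have [? []] := hM t.
have bz : bnd z by exists M => t; have [? []] := hM t.
have hy : exists Y, convg y Y.
  case: (pselect (exists t1, 0 < w R a x y t1)) => [[t1 h1] | hn].
    apply: (@mono_conv y M t1); first by move=> t; have [? []] := hM t.
    move=> s t ts st; apply: (mvt_le (df := w R a x y) Hy st) => u /andP[u1 u2].
    rewrite leNgt; apply/negP => hu; have tu : t1 < u by lra.
    exact: (@noswitch t1 u tu h1 hu).
  have hn' : forall t, w R a x y t <= 0.
    by move=> t; rewrite leNgt; apply/negP => h; apply: hn; exists t.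
  have [l hl] : exists l, convg (fun t => - y t) l.
    apply: (@mono_conv _ M 0); first by move=> t; rewrite normrN; have [? []] := hM t.
    move=> s t ts st.
    have Hny : forall u, is_derive u 1 (fun v => - y v) (- w R a x y u) by move=> u; apply: dN.
    apply: (mvt_le Hny st) => u _; rewrite oppr_ge0; exact: hn'.
  by exists (- l); apply: (@conv_ext (fun t => - - y t)) => [t|]; [rewrite opprK | exact: convN].
have [Y cy] := hy.
have [K1 hK1] : bnd (w1 R a x y z) by rewrite /w1 /w; bt.
have cw := @barbalat y (w R a x y) (w1 R a x y z) Y K1 cy Hy (Hw Hx Hy) hK1.
have [K2 hK2] : bnd (w2 R a b c x y z) by rewrite /w2 /w1 /zd /w; bt.
have cw1 := @barbalat (w R a x y) (w1 R a x y z) (w2 R a b c x y z) 0 K2 cw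
  (Hw Hx Hy) (Hw1 Hx Hy Hz) hK2.
have ca : forall k : R, forall t, `|(fun _ : R => k) t| <= `|k| by [].
have cz : convg z (- Y).
  apply: (@conv_ext (fun t => - y t - w1 R a x y z t + a * w R a x y t)) => [t|].
    by rewrite /w1; ring.
  have := convD (convD (convN cy) (convN cw1)) (convM (ca a) (convC a) cw).
  by rewrite oppr0 addr0 mulr0 addr0.
have [K3 hK3] : bnd (zdd R b c x y z) by rewrite /zdd /zd; bt.
have czd := @barbalat z (zd R b c x z) (zdd R b c x y z) (- Y) K3 cz Hz (Hzd Hx Hz) hK3.
have cx : convg x (- a * Y).
  apply: (@conv_ext (fun t => w R a x y t + - a * y t)) => [t|].
    by rewrite /w; ring.
  have := convD cw (convM (ca (- a)) (convC (- a)) cy).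
  by rewrite add0r.
have hMz : forall t, `|z t| <= M by move=> t; have [? []] := hM t.
have czd' := convD (convM (ca b) (convC b) cx) (convM hMz cz (convD cx (convC (- c)))).
have := conv_uniq czd czd' => e.
exists (- a * Y), Y, (- Y); split => //; split; first ring.
split; first ring.
by rewrite -e.
Qed.

End Part1.
End Conv.


Arguments derive_fst {R U V f x df}.
Arguments derive_snd {R U V f x df}.

Section P.
Variable R : realType.

Lemma conv_cvg (f : R -> R) l : convg R f l -> f t @[t --> +oo] --> l.
Proof.
move=> hf; apply/cvgrPdist_lt => e e0; have [T H] := hf e e0.
exists T; split; first exact: num_real.
by move=> t Tt; rewrite distrC; apply: H; exact: ltW.
Qed.

Arguments conv_cvg {f l}.

Lemma closure_lim (S : set (R * R * R)) (g : R -> R * R * R) X Y Z :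
  (forall t, S (g t)) -> convg R (fun t => (g t).1.1) X -> convg R (fun t => (g t).1.2) Y ->
  convg R (fun t => (g t).2) Z -> closure S ((X, Y), Z).
Proof.
move=> gS cx cy cz.
have hc : (fun t => (((g t).1.1, (g t).1.2), (g t).2)) t @[t --> +oo] --> ((X, Y), Z).
  have h1 : ((g t).1.1, (g t).1.2) @[t --> +oo] --> (X, Y).
    exact: (cvg_pair (conv_cvg cx) (conv_cvg cy)).
  exact: (cvg_pair h1 (conv_cvg cz)).
apply: (closed_cvg _ (@closed_closure _ S) _ _ hc).
exists 0; split; first exact: num_real.
move=> t _ /=; apply: subset_closure.
by have := gS t; case: (g t) => [[]].
Qed.
Lemma traj_ode (a b c : R) (g : R -> R * R * R) : is_trajectory a b c g ->
  [/\ forall t : R, is_derive t 1 (fun u => (g u).1.1) (- (g t).1.2 - (g t).2),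
      forall t : R, is_derive t 1 (fun u => (g u).1.2) ((g t).1.1 + a * (g t).1.2) &
      forall t : R, is_derive t 1 (fun u => (g u).2)
         (b * (g t).1.1 + (g t).2 * ((g t).1.1 - c))].
Proof.
move=> Hg; split => t.
- have h1 := derive_fst (Hg t). have h2 := derive_fst h1. exact: h2.
- exact: (derive_snd (derive_fst (Hg t))).
- exact: (derive_snd (Hg t)).
Qed.

Lemma fixed_of (a b c : R) (q : R * R * R) :
  - q.1.2 - q.2 = 0 -> q.1.1 + a * q.1.2 = 0 -> b * q.1.1 + q.2 * (q.1.1 - c) = 0 ->
  is_fixed_point a b c q.
Proof.
move=> h1 h2 h3; rewrite /is_fixed_point /rossler /px /py /pz.
by rewrite h1 h2 h3.
Qed.

Lemma Hp_transverse (a b c : R) q : 0 < a -> H_p a q -> transverse_to_plane a b c q.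
Proof.
move=> a0 [h1 h2]; rewrite /transverse_to_plane /rossler /px /py /pz /=.
rewrite /py /px in h1; rewrite /px /pz in h2.
have -> : q.1.1 + a * q.1.2 = 0 by rewrite h1; field; rewrite gt_eqF.
rewrite mulr0 addr0.
have : q.1.1 / a = - q.1.2 by rewrite h1; field; rewrite gt_eqF.
move=> e; rewrite e in h2; rewrite lt_eqF //; lra.
Qed.


Lemma gpair (g : R -> R * R * R) t : g t = (((g t).1.1, (g t).1.2), (g t).2).
Proof. by case: (g t) => [[]]. Qed.

Lemma part2 (a b c : R) (g : R -> R * R * R) (T : R) : 0 < a ->
  is_trajectory a b c g -> 0 < T -> (forall t, g (t + T) = g t) ->
  (exists t1 t2, g t1 <> g t2) ->
  exists t, H_p a (g t) /\ transverse_to_plane a b c (g t).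
Proof.
move=> a0 Hg T0 Hper [t1 [t2 hne]].
have [Hx Hy Hz] := @traj_ode a b c g Hg.
pose x := fun u => (g u).1.1; pose y := fun u => (g u).1.2; pose z := fun u => (g u).2.
have NF : forall t, ~ (- y t - z t = 0 /\ @w R a x y t = 0 /\ @zd R b c x z t = 0).
  move=> t [f1 [f2 f3]]; apply: hne.
  have [e1 [e2 e3]] := @energy R a b c x y z Hx Hy Hz t t1 (x t) (y t) (z t) f1 f2 f3 erefl erefl erefl.
  have [e4 [e5 e6]] := @energy R a b c x y z Hx Hy Hz t t2 (x t) (y t) (z t) f1 f2 f3 erefl erefl erefl.
  rewrite (gpair g t1) (gpair g t2).
  by rewrite -/(x t1) -/(y t1) -/(z t1) -/(x t2) -/(y t2) -/(z t2) e1 e2 e3 e4 e5 e6.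
have [m mT hm] := EVT_max (ltW T0) (continuous_subspaceT (@der_cont R _ _ Hy)).
have yper : forall u, y (u + T) = y u by move=> u; rewrite /y Hper.
have inT : forall u, 0 <= u <= T -> y u <= y m.
  by move=> u hu; apply: hm; rewrite in_itv /=.
move: mT; rewrite in_itv /= => /andP[m0 mT].
have ymax : forall u, `|u - m| < T -> y u <= y m.
  move=> u; rewrite ltr_norml => /andP[h1 h2].
  case: (lerP 0 u) => u0.
    case: (lerP u T) => uT; first by apply: inT; apply/andP.
    rewrite -(subrK T u) yper; apply: inT; apply/andP; split; lra.
  rewrite -yper; apply: inT; apply/andP; split; lra.
have [h1 h2] := @local_max R a b c x y z Hx Hy Hz m T a0 T0 ymax (NF m).
exists m; have hp : H_p a (g m) by split.
by split => //; apply: Hp_transverse.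
Qed.


Lemma part1 (a b c : R) (S : set (R * R * R)) : 0 < a ->
  S !=set0 -> bounded3 S -> invariant_set a b c S ->
  (forall q, closure S q -> ~ is_fixed_point a b c q) ->
  exists q, S q /\ H_p a q /\ transverse_to_plane a b c q.
Proof.
move=> a0 [q Sq] [M hM] inv hclo.
have [g [Hg [g0 gS]]] := inv q Sq.
have [Hx Hy Hz] := @traj_ode a b c g Hg.
pose x := fun u => (g u).1.1; pose y := fun u => (g u).1.2; pose z := fun u => (g u).2.
case: (pselect (exists t, H_p a (g t))) => [[t ht] | noH].
  by exists (g t); split => //; split => //; apply: Hp_transverse.
have NF : forall t, ~ (- y t - z t = 0 /\ @w R a x y t = 0 /\ @zd R b c x z t = 0).
  move=> t [f1 [f2 f3]]; apply: (hclo (g t)); first by apply: subset_closure.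
  exact: fixed_of.
have noH' : forall t, ~ (y t = - x t / a /\ x t / a < z t).
  by move=> t h; apply: noH; exists t.
have hM' : forall t, `|x t| <= M /\ `|y t| <= M /\ `|z t| <= M.
  by move=> t; apply: hM.
have [X [Y [Z [cx cy cz [f1 [f2 f3]]]]]] :=
  @limit_fixed R a b c x y z Hx Hy Hz a0 noH' NF M hM'.
exfalso; apply: (hclo ((X, Y), Z)); first exact: closure_lim.
exact: fixed_of.
Qed.

End P.

Theorem lemma2p1 (R : realType) (P : set (R * R * R))
  (HPopen : open P) (HP : forall p, P p -> rossler_param_ok p)
  (a b c : R) (Habc : P ((a, b), c)) :
  (forall S : set (R * R * R),
      S !=set0 -> bounded3 S -> invariant_set a b c S ->
      (forall q, closure S q -> ~ is_fixed_point a b c q) ->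
      exists q, S q /\ H_p a q /\ transverse_to_plane a b c q) /\
  (forall (g : R -> R * R * R) (T : R),
      is_trajectory a b c g -> 0 < T -> (forall t, g (t + T) = g t) ->
      (exists t1 t2, g t1 <> g t2) ->
      exists t, H_p a (g t) /\ transverse_to_plane a b c (g t)).
Proof.
have [[/andP[a0 _] _] _ _] := HP _ Habc.
split.
- move=> S; exact: part1.
- move=> g T; exact: part2.
Qed.
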